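(* Let ${}^*$ be a nonstandard analysis and $\mathfrak m$ an infinite cardinal. For every map $f:A\to B$ and every $\mathfrak m$-confined $x\in{}^*A$, the element ${}^*f(x)\in{}^*B$ is $\mathfrak m$-confined. Consequently, setting ${}^*A_{\mathfrak m}:=\{x\in{}^*A: x \text{ is } \mathfrak m\text{-confined}\}$ and letting $f:A\to B$ act by the restriction of ${}^*f$, the assignment $A\mapsto{}^*A_{\mathfrak m}$ is again a nonstandard analysis (and it is $\mathfrak m$-confined).
   Context: A nonstandard analysis is a functor ${}^*:\mathbf{Set}\to\mathbf{Set}$ (write ${}^*A$, ${}^*f$ for images of sets and maps) such that (i) it maps the full subcategory $\mathbf{Fin}$ of finite sets into itself and restricts to an equivalence of $\mathbf{Fin}$ with itself; (ii) it preserves finite projective limits (equivalently finite products and equalizers). Products ${}^*(A\times B)$ are identified with ${}^*A\times{}^*B$, and for $E\subseteq A$, ${}^*E$ is regarded as a subset of ${}^*A$ (image of the inclusion, which is injective). For an infinite cardinal $\mathfrak m$, an element $x\in{}^*A$ is $\mathfrak m$-confined if there is $A'\subseteq A$ with $|A'|\le\mathfrak m$ and $x\in{}^*A'$; the nonstandard analysis is $\mathfrak m$-confined if every element of ${}^*A$, for every set $A$, is $\mathfrak m$-confined. *)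

(* Defs.v *)
(* Sets are modelled by types, maps by functions, equality of
   maps is pointwise (extensional) equality, subsets by predicates. *)
From Stdlib Require Import List.

Definition injective {A B : Type} (f : A -> B) : Prop :=
  forall x y, f x = f y -> x = y.
Definition surjective {A B : Type} (f : A -> B) : Prop :=
  forall y, exists x, f x = y.
Definition bijective {A B : Type} (f : A -> B) : Prop :=
  injective f /\ surjective f.

Definition finiteT (A : Type) : Prop :=
  exists l : list A, NoDup l /\ forall x, In x l.

Definition is_functor (Fob : Type -> Type)
  (Fmap : forall A B : Type, (A -> B) -> Fob A -> Fob B) : Prop :=
  (forall (A : Type) (x : Fob A), Fmap A A (fun a => a) x = x) /\
  (forall (A B C : Type) (f : A -> B) (g : B -> C) (x : Fob A),
      Fmap A C (fun a => g (f a)) x = Fmap B C g (Fmap A B f x)).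

(* (i) maps Fin into Fin and restricts to an equivalence Fin -> Fin
   (faithful, full, essentially surjective). *)
Definition fin_equivalence (Fob : Type -> Type)
  (Fmap : forall A B : Type, (A -> B) -> Fob A -> Fob B) : Prop :=
  (forall A : Type, finiteT A -> finiteT (Fob A)) /\
  (forall (A B : Type), finiteT A -> finiteT B ->
     forall f g : A -> B, (forall x, Fmap A B f x = Fmap A B g x) ->
     forall a, f a = g a) /\
  (forall (A B : Type), finiteT A -> finiteT B ->
     forall h : Fob A -> Fob B, exists f : A -> B,
       forall x, Fmap A B f x = h x) /\
  (forall C : Type, finiteT C ->
     exists A : Type, finiteT A /\ exists h : Fob A -> C, bijective h).

(* (ii) preservation of finite projective limits: terminal object,
   binary products, equalizers. *)
Definition preserves_finite_limits (Fob : Type -> Type)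
  (Fmap : forall A B : Type, (A -> B) -> Fob A -> Fob B) : Prop :=
  (exists u : Fob unit, forall v : Fob unit, v = u) /\
  (forall A B : Type,
     bijective (fun z : Fob (A * B)%type =>
        (Fmap (A * B)%type A fst z, Fmap (A * B)%type B snd z))) /\
  (forall (A B : Type) (f g : A -> B),
     injective (Fmap {a : A | f a = g a} A (@proj1_sig _ _)) /\
     (forall x : Fob A,
        Fmap A B f x = Fmap A B g x <->
        exists y : Fob {a : A | f a = g a}, Fmap _ A (@proj1_sig _ _) y = x)).

Definition is_NSA (Fob : Type -> Type)
  (Fmap : forall A B : Type, (A -> B) -> Fob A -> Fob B) : Prop :=
  is_functor Fob Fmap /\ fin_equivalence Fob Fmap /\
  preserves_finite_limits Fob Fmap.

(* For E ⊆ A (a predicate P), *E ⊆ *A is the image of *(inclusion). *)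
Definition star_sub (Fob : Type -> Type)
  (Fmap : forall A B : Type, (A -> B) -> Fob A -> Fob B)
  {A : Type} (P : A -> Prop) (x : Fob A) : Prop :=
  exists y : Fob {a : A | P a}, Fmap {a : A | P a} A (@proj1_sig _ _) y = x.

(* The cardinal m is represented by a type M; |A'| <= m means an injection
   A' -> M; m infinite means an injection nat -> M. *)
Definition infinite_card (M : Type) : Prop :=
  exists i : nat -> M, injective i.

Definition confined (Fob : Type -> Type)
  (Fmap : forall A B : Type, (A -> B) -> Fob A -> Fob B)
  (M : Type) {A : Type} (x : Fob A) : Prop :=
  exists P : A -> Prop,
    (exists i : {a : A | P a} -> M, injective i) /\ star_sub Fob Fmap P x.

Definition is_confined_NSA (Fob : Type -> Type)
  (Fmap : forall A B : Type, (A -> B) -> Fob A -> Fob B) (M : Type) : Prop :=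
  forall (A : Type) (x : Fob A), confined Fob Fmap M x.

Definition conf_ob (Fob : Type -> Type)
  (Fmap : forall A B : Type, (A -> B) -> Fob A -> Fob B) (M : Type)
  (A : Type) : Type :=
  {x : Fob A | confined Fob Fmap M x}.

Definition conf_map (Fob : Type -> Type)
  (Fmap : forall A B : Type, (A -> B) -> Fob A -> Fob B) (M : Type)
  (H : forall (A B : Type) (f : A -> B) (x : Fob A),
        confined Fob Fmap M x -> confined Fob Fmap M (Fmap A B f x))
  (A B : Type) (f : A -> B) (x : conf_ob Fob Fmap M A) : conf_ob Fob Fmap M B :=
  exist _ (Fmap A B f (proj1_sig x)) (H A B f (proj1_sig x) (proj2_sig x)).

(* Main.v *)
Require Import Defs.
From mathcomp Require ssreflect ssrbool classical_sets boolp.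
Module ZornW.
Import ssreflect ssrbool classical_sets boolp.
Local Open Scope classical_set_scope.
Lemma my_zorn (T : Type) (P : (T -> Prop) -> Prop) :
 (forall F : (T -> Prop) -> Prop, (forall X, F X -> P X) ->
   (forall X Y, F X -> F Y -> (forall t, X t -> Y t) \/ (forall t, Y t -> X t)) ->
   P (fun t => exists X, F X /\ X t)) ->
 exists A, P A /\ forall B, (forall t, A t -> B t) -> P B -> forall t, B t -> A t.
Proof.
move=> H.
have HZ : forall F : set (set T), F `<=` P -> total_on F subset -> P (\bigcup_(X in F) X).
{ move=> F FP Ftot.
  have E : (\bigcup_(X in F) X) = (fun t => exists X, F X /\ X t).
  { apply: funext => t; apply: propext; split.
    - by case=> X FX Xt; exists X.
    - by case=> X [FX Xt]; exists X. }
  rewrite E. apply: H.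
  - exact: FP.
  - move=> X Y FX FY. by case: (Ftot X Y FX FY) => s; [left|right]. }
have [A [PA Amax]] := Zorn_bigcup HZ.
exists A; split => // B AB PB t Bt.
apply: contrapT => nAt.
apply: (Amax B) => //. split => //. move=> BA. exact: nAt (BA t Bt).
Qed.
End ZornW.

From Stdlib Require Import Classical ClassicalEpsilon ProofIrrelevance Cantor List.

Lemma sig_eq {A : Type} {P : A -> Prop} (u v : sig P) :
  proj1_sig u = proj1_sig v -> u = v.
Proof. destruct u, v; simpl; intros ->; f_equal; apply proof_irrelevance. Qed.

Lemma choose_fun {X Y : Type} (R : X -> Y -> Prop) :
  (forall x, exists y, R x y) -> exists f : X -> Y, forall x, R x (f x).
Proof.
  intros H. exists (fun x => proj1_sig (constructive_indefinite_description _ (H x))).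
  intro x. exact (proj2_sig (constructive_indefinite_description _ (H x))).
Qed.

Lemma comparability (X Y : Type) :
  (exists f : X -> Y, injective f) \/ (exists g : Y -> X, injective g).
Proof.
  set (good := fun R : X * Y -> Prop =>
    (forall x y y', R (x, y) -> R (x, y') -> y = y') /\
    (forall x x' y, R (x, y) -> R (x', y) -> x = x')).
  destruct (ZornW.my_zorn (X * Y) good) as [R [[Rf Ri] Rmax]].
  { intros F FP Ftot. split.
    - intros x y y' [A [FA HA]] [B [FB HB]].
      destruct (Ftot A B FA FB) as [AB|BA].
      + exact (proj1 (FP B FB) x y y' (AB _ HA) HB).
      + exact (proj1 (FP A FA) x y y' HA (BA _ HB)).
    - intros x x' y [A [FA HA]] [B [FB HB]].
      destruct (Ftot A B FA FB) as [AB|BA].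
      + exact (proj2 (FP B FB) x x' y (AB _ HA) HB).
      + exact (proj2 (FP A FA) x x' y HA (BA _ HB)). }
  destruct (classic (forall x, exists y, R (x, y))) as [Hx|Hx].
  { left. destruct (choose_fun (fun x y => R (x, y)) Hx) as [f Hf].
    exists f. intros a b E. apply (Ri a b (f a)); [apply Hf|rewrite E; apply Hf]. }
  destruct (classic (forall y, exists x, R (x, y))) as [Hy|Hy].
  { right. destruct (choose_fun (fun y x => R (x, y)) Hy) as [g Hg].
    exists g. intros a b E. apply (Rf (g a) a b); [apply Hg|rewrite E; apply Hg]. }
  exfalso.
  apply not_all_ex_not in Hx. destruct Hx as [x0 Hx0].
  apply not_all_ex_not in Hy. destruct Hy as [y0 Hy0].
  set (R' := fun p => R p \/ p = (x0, y0)).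
  assert (HR' : good R').
  { split.
    - intros x y y' [H1|H1] [H2|H2].
      + exact (Rf _ _ _ H1 H2).
      + injection H2; intros; subst. exfalso; apply Hx0; exists y; exact H1.
      + injection H1; intros; subst. exfalso; apply Hx0; exists y'; exact H2.
      + injection H1; injection H2; intros; subst; reflexivity.
    - intros x x' y [H1|H1] [H2|H2].
      + exact (Ri _ _ _ H1 H2).
      + injection H2; intros; subst. exfalso; apply Hy0; exists x; exact H1.
      + injection H1; intros; subst. exfalso; apply Hy0; exists x'; exact H2.
      + injection H1; injection H2; intros; subst; reflexivity. }
  assert (R (x0, y0)) as H0.
  { apply (Rmax R'); [intros t Ht; left; exact Ht| exact HR' | right; reflexivity]. }
  apply Hx0; exists y0; exact H0.
Qed.


Lemma to_nat_inj (p q : nat * nat) : to_nat p = to_nat q -> p = q.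
Proof. intro E. rewrite <- (cancel_of_to p), <- (cancel_of_to q), E. reflexivity. Qed.

Section Hess.
Definition hdom {M : Type} (A : (M * M) * M -> Prop) (a : M) : Prop :=
  exists b c, A ((a, b), c).
Definition hgood {M : Type} (A : (M * M) * M -> Prop) : Prop :=
 (forall p c c', A (p,c) -> A (p,c') -> c = c') /\
 (forall p p' c, A (p,c) -> A (p',c) -> p = p') /\
 (forall a b, hdom A a -> hdom A b -> exists c, A ((a,b),c)) /\
 (forall a b c, A((a,b),c) -> hdom A b /\ hdom A c).
End Hess.

Lemma hessenberg (M : Type) (i : nat -> M) (Hi : injective i) :
  exists F : M * M -> M, injective F.
Proof.
  destruct (ex_intro (fun f : nat * nat -> nat => injective f) to_nat to_nat_inj) as [pn pninj].
  set (G0 := fun t : (M * M) * M => exists n k, t = ((i n, i k), i (pn (n,k)))).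
  set (PP := fun A => hgood A /\ ((forall t, ~ A t) \/ (forall t, G0 t -> A t))).
  assert (goodG0 : hgood G0).
  { split; [|split; [|split]].
    - intros p c c' [n [k E]] [n' [k' E']].
      injection E as -> ->. injection E' as E1 E2 ->.
      apply Hi in E1. apply Hi in E2. subst. reflexivity.
    - intros p p' c [n [k E]] [n' [k' E']].
      injection E as -> ->. injection E' as -> E3.
      apply Hi, pninj in E3. injection E3 as -> ->. reflexivity.
    - intros a b [b1 [c1 [n [k E]]]] [b2 [c2 [n' [k' E']]]].
      injection E as -> _ _. injection E' as -> _ _.
      exists (i (pn (n, n'))). exists n, n'. reflexivity.
    - intros a b c [n [k E]]. injection E as -> -> ->. split.
      + exists (i 0), (i (pn (k, 0))). exists k, 0. reflexivity.
      + exists (i 0), (i (pn (pn (n,k), 0))). exists (pn (n, k)), 0. reflexivity. }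
  destruct (ZornW.my_zorn _ PP) as [A [[[Af [Ai [At Ar]]] HA0] Amax]].
  { intros F FP Ftot. split.
    - split; [|split; [|split]].
      + intros p c c' [X [FX HX]] [Y [FY HY]].
        destruct (Ftot X Y FX FY) as [XY|YX].
        * exact (proj1 (proj1 (FP Y FY)) p c c' (XY _ HX) HY).
        * exact (proj1 (proj1 (FP X FX)) p c c' HX (YX _ HY)).
      + intros p p' c [X [FX HX]] [Y [FY HY]].
        destruct (Ftot X Y FX FY) as [XY|YX].
        * exact (proj1 (proj2 (proj1 (FP Y FY))) p p' c (XY _ HX) HY).
        * exact (proj1 (proj2 (proj1 (FP X FX))) p p' c HX (YX _ HY)).
      + intros a b [b1 [c1 [X [FX HX]]]] [b2 [c2 [Y [FY HY]]]].
        destruct (Ftot X Y FX FY) as [XY|YX].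
        * destruct (proj1 (proj2 (proj2 (proj1 (FP Y FY)))) a b
             (ex_intro _ b1 (ex_intro _ c1 (XY _ HX))) (ex_intro _ b2 (ex_intro _ c2 HY)))
            as [c Hc].
          exists c, Y. split; assumption.
        * destruct (proj1 (proj2 (proj2 (proj1 (FP X FX)))) a b
             (ex_intro _ b1 (ex_intro _ c1 HX)) (ex_intro _ b2 (ex_intro _ c2 (YX _ HY))))
            as [c Hc].
          exists c, X. split; assumption.
      + intros a b c [X [FX HX]].
        destruct (proj2 (proj2 (proj2 (proj1 (FP X FX)))) a b c HX)
          as [[b1 [c1 H1]] [b2 [c2 H2]]].
        split; [exists b1, c1, X | exists b2, c2, X]; split; assumption.
    - destruct (classic (exists X, F X /\ exists t, X t)) as [[X [FX [t Xt]]]|NE].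
      + right. destruct (proj2 (FP X FX)) as [E|E].
        * exfalso; exact (E t Xt).
        * intros s Hs. exists X. split; [exact FX| exact (E s Hs)].
      + left. intros t [X [FX Xt]]. apply NE. exists X. split; [exact FX|exists t; exact Xt]. }
  assert (HG0 : forall t, G0 t -> A t).
  { destruct HA0 as [E|E]; [|exact E].
    apply (Amax G0); [intros t Ht; exfalso; exact (E t Ht)| split; [exact goodG0|right; auto]]. }
  clear HA0.
  set (S := hdom A).
  assert (Sin : forall n, S (i n)).
  { intro n. exists (i 0), (i (pn (n, 0))). apply HG0. exists n, 0. reflexivity. }
  assert (inh : inhabited M) by exact (inhabits (i 0)).
  set (g := fun a b => epsilon inh (fun c => A ((a, b), c))).
  assert (gA : forall a b, S a -> S b -> A ((a, b), g a b)).
  { intros a b Ha Hb. unfold g. apply epsilon_spec. apply At; assumption. }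
  assert (AS : forall a b c, A ((a,b),c) -> S a /\ S b /\ S c).
  { intros a b c H. destruct (Ar a b c H). split; [exists b, c; exact H|split; assumption]. }
  assert (gS : forall a b, S a -> S b -> S (g a b)).
  { intros a b Ha Hb. exact (proj2 (proj2 (AS _ _ _ (gA a b Ha Hb)))). }
  assert (ginj : forall a b a' b', S a -> S b -> S a' -> S b' -> g a b = g a' b' -> a = a' /\ b = b').
  { intros a b a' b' Ha Hb Ha' Hb' E.
    pose proof (gA a b Ha Hb) as H1. pose proof (gA a' b' Ha' Hb') as H2. rewrite E in H1.
    pose proof (Ai _ _ _ H1 H2) as E'. injection E' as -> ->. split; reflexivity. }
  set (e0 := i 0). set (e1 := i 1).
  assert (e01 : e0 <> e1). { intro E. apply Hi in E. discriminate. }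
  destruct (classic (exists h : M -> M, (forall a a', S a -> S a' -> h a = h a' -> a = a') /\
                                       (forall a, S a -> ~ S (h a)))) as [[h [hinj hout]]|NQ].
  - exfalso.
    set (D := fun y => exists a, S a /\ y = h a).
    set (S' := fun y => S y \/ D y).
    set (hinv := fun y => epsilon inh (fun a => S a /\ h a = y)).
    assert (hinvP : forall y, D y -> S (hinv y) /\ h (hinv y) = y).
    { intros y [a [Sa ->]]. unfold hinv. apply epsilon_spec. exists a. split; auto. }
    assert (DnS : forall y, D y -> ~ S y).
    { intros y [a [Sa ->]]. apply hout; exact Sa. }
    set (enc := fun x => match excluded_middle_informative (S x) with
                         | left _ => g e0 x | right _ => g e1 (hinv x) end).
    assert (encS : forall x, S' x -> S (enc x)).
    { intros x Hx. unfold enc. destruct (excluded_middle_informative (S x)) as [Sx|nSx].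
      - apply gS; [apply Sin|exact Sx].
      - destruct Hx as [Sx|Dx]; [contradiction|]. apply gS; [apply Sin|apply hinvP, Dx]. }
    assert (encinj : forall x x', S' x -> S' x' -> enc x = enc x' -> x = x').
    { intros x x' Hx Hx'. unfold enc.
      destruct (excluded_middle_informative (S x)) as [Sx|nSx];
      destruct (excluded_middle_informative (S x')) as [Sx'|nSx']; intro E.
      - exact (proj2 (ginj _ _ _ _ (Sin 0) Sx (Sin 0) Sx' E)).
      - destruct Hx' as [?|Dx']; [contradiction|].
        exfalso; apply e01; exact (proj1 (ginj _ _ _ _ (Sin 0) Sx (Sin 1) (proj1 (hinvP _ Dx')) E)).
      - destruct Hx as [?|Dx]; [contradiction|].
        exfalso; apply e01; symmetry; exact (proj1 (ginj _ _ _ _ (Sin 1) (proj1 (hinvP _ Dx)) (Sin 0) Sx' E)).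
      - destruct Hx as [?|Dx]; [contradiction|]. destruct Hx' as [?|Dx']; [contradiction|].
        pose proof (proj2 (ginj _ _ _ _ (Sin 1) (proj1 (hinvP _ Dx)) (Sin 1) (proj1 (hinvP _ Dx')) E)) as E2.
        rewrite <- (proj2 (hinvP _ Dx)), <- (proj2 (hinvP _ Dx')), E2. reflexivity. }
    set (N := fun t : (M * M) * M => exists x y, t = ((x, y), h (g (enc x) (enc y))) /\
                 S' x /\ S' y /\ ~ (S x /\ S y)).
    set (A' := fun t => A t \/ N t).
    assert (d1 : forall a, hdom A' a -> S' a).
    { intros a [b [c [H|[x [y [E [Hx [Hy _]]]]]]]].
      - left. exists b, c. exact H.
      - injection E as -> _ _. exact Hx. }
    assert (d2 : forall a, S' a -> hdom A' a).
    { intros a [Sa|Da].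
      - exists a, (g a a). left. apply gA; assumption.
      - exists a, (h (g (enc a) (enc a))). right. exists a, a. split; [reflexivity|].
        split; [right; exact Da|split; [right; exact Da|]].
        intros [Sa _]. exact (DnS a Da Sa). }
    assert (NS : forall x y z, N ((x,y),z) -> D z /\ ~ S z).
    { intros x y z [x' [y' [E [Hx [Hy _]]]]]. injection E as -> -> ->.
      assert (Dz : D (h (g (enc x') (enc y')))).
      { exists (g (enc x') (enc y')). split; [apply gS; apply encS; assumption|reflexivity]. }
      split; [exact Dz|exact (DnS _ Dz)]. }
    assert (goodA' : hgood A').
    { split; [|split; [|split]].
      - intros [x y] c c' [H1|H1] [H2|H2].
        + exact (Af _ _ _ H1 H2).
        + destruct H2 as [x' [y' [E [_ [_ NS2]]]]]. injection E as -> -> ->.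
          destruct (AS _ _ _ H1) as [? [? _]]. exfalso; apply NS2; split; assumption.
        + destruct H1 as [x' [y' [E [_ [_ NS2]]]]]. injection E as -> -> ->.
          destruct (AS _ _ _ H2) as [? [? _]]. exfalso; apply NS2; split; assumption.
        + destruct H1 as [x1 [y1 [E1 _]]]. destruct H2 as [x2 [y2 [E2 _]]].
          injection E1 as -> -> ->. injection E2 as -> -> ->. reflexivity.
      - intros [x y] [x' y'] c [H1|H1] [H2|H2].
        + exact (Ai _ _ _ H1 H2).
        + exfalso. destruct (AS _ _ _ H1) as [_ [_ Sc]]. exact (proj2 (NS _ _ _ H2) Sc).
        + exfalso. destruct (AS _ _ _ H2) as [_ [_ Sc]]. exact (proj2 (NS _ _ _ H1) Sc).
        + destruct H1 as [x1 [y1 [E1 [Hx1 [Hy1 _]]]]]. destruct H2 as [x2 [y2 [E2 [Hx2 [Hy2 _]]]]].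
          injection E1 as -> -> ->. injection E2 as -> -> E.
          apply hinj in E; [|apply gS; apply encS; assumption|apply gS; apply encS; assumption].
          apply ginj in E; try (apply encS; assumption). destruct E as [E1 E2].
          apply encinj in E1; try assumption. apply encinj in E2; try assumption.
          subst. reflexivity.
      - intros a b Ha Hb. apply d1 in Ha. apply d1 in Hb.
        destruct (classic (S a /\ S b)) as [[Sa Sb]|nS].
        + exists (g a b). left. apply gA; assumption.
        + exists (h (g (enc a) (enc b))). right. exists a, b. split; [reflexivity|auto].
      - intros a b c [H|H].
        + destruct (AS _ _ _ H) as [_ [Sb Sc]]. split; apply d2; left; assumption.
        + split.
          * apply d2. destruct H as [x [y [E [_ [Hy _]]]]]. injection E as -> -> ->. exact Hy.
          * apply d2. right. exact (proj1 (NS _ _ _ H)). }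
    assert (HA' : forall t, A' t -> A t).
    { apply Amax; [intros t Ht; left; exact Ht|split; [exact goodA'|right; intros t Ht; left; apply HG0, Ht]]. }
    set (x := h e0).
    assert (Dx : D x) by (exists e0; split; [apply Sin|reflexivity]).
    assert (Hx : A ((x, x), h (g (enc x) (enc x)))).
    { apply HA'. right. exists x, x. split; [reflexivity|].
      split; [right; exact Dx|split; [right; exact Dx|]]. intros [Sx _]. exact (DnS x Dx Sx). }
    destruct (AS _ _ _ Hx) as [Sx _]. exact (DnS x Dx Sx).
  - destruct (comparability {a : M | ~ S a} {a : M | S a}) as [[f finj]|[f finj]].
    + set (u := fun x => match excluded_middle_informative (S x) with
                         | left _ => g e0 x | right H => g e1 (proj1_sig (f (exist _ x H))) end).
      assert (uS : forall x, S (u x)).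
      { intro x. unfold u. destruct (excluded_middle_informative (S x)).
        - apply gS; [apply Sin|assumption].
        - apply gS; [apply Sin|exact (proj2_sig _)]. }
      assert (uinj : forall x x', u x = u x' -> x = x').
      { intros x x'. unfold u.
        destruct (excluded_middle_informative (S x)) as [Sx|nSx];
        destruct (excluded_middle_informative (S x')) as [Sx'|nSx']; intro E.
        - exact (proj2 (ginj _ _ _ _ (Sin 0) Sx (Sin 0) Sx' E)).
        - exfalso; apply e01; exact (proj1 (ginj _ _ _ _ (Sin 0) Sx (Sin 1) (proj2_sig _) E)).
        - exfalso; apply e01; symmetry; exact (proj1 (ginj _ _ _ _ (Sin 1) (proj2_sig _) (Sin 0) Sx' E)).
        - pose proof (proj2 (ginj _ _ _ _ (Sin 1) (proj2_sig _) (Sin 1) (proj2_sig _) E)) as E2.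
          apply sig_eq in E2. apply finj in E2. exact (f_equal (@proj1_sig _ _) E2). }
      exists (fun p => g (u (fst p)) (u (snd p))).
      intros [a b] [a' b'] E. simpl in E.
      destruct (ginj _ _ _ _ (uS a) (uS b) (uS a') (uS b') E) as [E1 E2].
      apply uinj in E1. apply uinj in E2. subst. reflexivity.
    + exfalso. apply NQ.
      exists (fun a => match excluded_middle_informative (S a) with
                       | left H => proj1_sig (f (exist _ a H)) | right _ => a end).
      split.
      * intros a a' Sa Sa'.
        destruct (excluded_middle_informative (S a)); [|contradiction].
        destruct (excluded_middle_informative (S a')); [|contradiction].
        intro E. apply sig_eq in E. apply finj in E. exact (f_equal (@proj1_sig _ _) E).
      * intros a Sa. destruct (excluded_middle_informative (S a)); [|contradiction].
        exact (proj2_sig (f (exist _ a s))).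
Qed.


Lemma conf_pres (Fob : Type -> Type) (Fmap : forall A B : Type, (A -> B) -> Fob A -> Fob B)
  (HF : is_functor Fob Fmap) (M : Type) (A B : Type) (f : A -> B) (x : Fob A) :
  confined Fob Fmap M x -> confined Fob Fmap M (Fmap A B f x).
Proof.
  destruct HF as [Hid Hcomp].
  intros [P [[i Hi] [y Hy]]]. subst x.
  set (Q := fun b => exists a, P a /\ f a = b).
  exists Q. split.
  - assert (pre : forall q : {b | Q b}, exists a : {a | P a}, f (proj1_sig a) = proj1_sig q).
    { intros [b [a [Pa E]]]. exists (exist _ a Pa). exact E. }
    destruct (choose_fun _ pre) as [pr Hpr].
    exists (fun q => i (pr q)). intros q q' E. apply Hi in E.
    apply sig_eq. rewrite <- (Hpr q), <- (Hpr q'), E. reflexivity.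
  - set (k := fun a : {a | P a} => exist Q (f (proj1_sig a))
                 (ex_intro _ (proj1_sig a) (conj (proj2_sig a) eq_refl))).
    exists (Fmap _ _ k y).
    transitivity (Fmap _ B (fun a => f (proj1_sig a)) y).
    + symmetry. exact (Hcomp _ _ _ k (@proj1_sig _ _) y).
    + exact (Hcomp _ _ _ (@proj1_sig _ _) f y).
Qed.

Lemma conf_of_inj (Fob : Type -> Type) (Fmap : forall A B : Type, (A -> B) -> Fob A -> Fob B)
  (HF : is_functor Fob Fmap) (M : Type) (X : Type) (i : X -> M) (Hi : injective i) (x : Fob X) :
  confined Fob Fmap M x.
Proof.
  destruct HF as [Hid Hcomp].
  exists (fun _ => True). split.
  - exists (fun q => i (proj1_sig q)). intros q q' E. apply sig_eq, Hi, E.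
  - exists (Fmap _ _ (fun a => exist (fun _ => True) a I) x).
    transitivity (Fmap X X (fun a => a) x).
    + symmetry. exact (Hcomp _ _ _ (fun a => exist (fun _ => True) a I) (@proj1_sig _ _) x).
    + exact (Hid X x).
Qed.

Lemma finite_inj_nat (A : Type) : finiteT A -> exists f : A -> nat, injective f.
Proof.
  intros [l [_ Hl]].
  assert (H : forall x, exists n, nth_error l n = Some x).
  { intro x. apply In_nth_error, Hl. }
  destruct (choose_fun _ H) as [f Hf]. exists f. intros x y E.
  pose proof (Hf x) as H1. rewrite E, Hf in H1. injection H1; auto.
Qed.


Lemma prod_conf (Fob : Type -> Type) (Fmap : forall A B : Type, (A -> B) -> Fob A -> Fob B)
  (HF : is_NSA Fob Fmap) (M : Type) (HM : infinite_card M) (A B : Type) (z : Fob (A * B)%type) :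
  confined Fob Fmap M (Fmap _ A fst z) -> confined Fob Fmap M (Fmap _ B snd z) ->
  confined Fob Fmap M z.
Proof.
  destruct HF as [HFf [_ [_ [Hprod _]]]]. pose proof HFf as [Hid Hcomp].
  intros [P1 [[i1 Hi1] [y1 Hy1]]] [P2 [[i2 Hi2] [y2 Hy2]]].
  destruct (proj2 (Hprod {a | P1 a} {b | P2 b}) (y1, y2)) as [w Hw].
  injection Hw as Hw1 Hw2.
  set (k := fun p : ({a | P1 a} * {b | P2 b})%type => (proj1_sig (fst p), proj1_sig (snd p))).
  assert (E : Fmap _ _ k w = z).
  { apply (proj1 (Hprod A B)). cbv beta. f_equal.
    - rewrite <- Hy1, <- Hw1.
      transitivity (Fmap _ A (fun p => proj1_sig (fst p)) w).
      + symmetry. exact (Hcomp _ _ _ k fst w).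
      + exact (Hcomp _ _ _ fst (@proj1_sig _ _) w).
    - rewrite <- Hy2, <- Hw2.
      transitivity (Fmap _ B (fun p => proj1_sig (snd p)) w).
      + symmetry. exact (Hcomp _ _ _ k snd w).
      + exact (Hcomp _ _ _ snd (@proj1_sig _ _) w). }
  rewrite <- E. apply conf_pres; [exact HFf|].
  destruct HM as [i Hi]. destruct (hessenberg M i Hi) as [F HFi].
  apply conf_of_inj with (i := fun p => F (i1 (fst p), i2 (snd p))); [exact HFf|].
  intros [a b] [a' b'] E'. apply HFi in E'. injection E' as E1 E2.
  apply Hi1 in E1. apply Hi2 in E2. subst. reflexivity.
Qed.

Lemma eq_conf (Fob : Type -> Type) (Fmap : forall A B : Type, (A -> B) -> Fob A -> Fob B)
  (HF : is_NSA Fob Fmap) (M : Type) (A B : Type) (f g : A -> B) (y0 : Fob {a | f a = g a}) :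
  confined Fob Fmap M (Fmap _ A (@proj1_sig _ _) y0) -> confined Fob Fmap M y0.
Proof.
  destruct HF as [HFf [_ [_ [_ Heq]]]]. pose proof HFf as [Hid Hcomp].
  intros [P [[i Hi] [w Hw]]].
  set (f' := fun p : {a | P a} => f (proj1_sig p)).
  set (g' := fun p : {a | P a} => g (proj1_sig p)).
  assert (Efg : Fmap A B f (Fmap _ A (@proj1_sig _ _) y0) = Fmap A B g (Fmap _ A (@proj1_sig _ _) y0)).
  { apply (proj2 (proj2 (Heq A B f g) _)). exists y0; reflexivity. }
  assert (Ew : Fmap _ B f' w = Fmap _ B g' w).
  { transitivity (Fmap A B f (Fmap _ A (@proj1_sig _ _) w)); [exact (Hcomp _ _ _ (@proj1_sig _ _) f w)|].
    rewrite Hw, Efg, <- Hw. symmetry. exact (Hcomp _ _ _ (@proj1_sig _ _) g w). }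
  destruct (proj1 (proj2 (Heq _ B f' g') w) Ew) as [v Hv].
  set (k := fun q : {p : {a | P a} | f' p = g' p} =>
              exist (fun a => f a = g a) (proj1_sig (proj1_sig q)) (proj2_sig q)).
  assert (E : Fmap _ _ k v = y0).
  { apply (proj1 (Heq A B f g)).
    transitivity (Fmap _ A (fun q => proj1_sig (proj1_sig q)) v).
    - symmetry. exact (Hcomp _ _ _ k (@proj1_sig _ _) v).
    - rewrite (Hcomp _ _ _ (@proj1_sig _ _) (@proj1_sig _ _) v), Hv. exact Hw. }
  rewrite <- E. apply conf_pres; [exact HFf|].
  apply conf_of_inj with (i := fun q => i (proj1_sig q)); [exact HFf|].
  intros q q' E'. apply Hi in E'. apply sig_eq, E'.
Qed.

Theorem mainTheorem2
  (Fob : Type -> Type)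
  (Fmap : forall A B : Type, (A -> B) -> Fob A -> Fob B)
  (HF : is_NSA Fob Fmap)
  (M : Type) (HM : infinite_card M) :
  (forall (A B : Type) (f : A -> B) (x : Fob A),
      confined Fob Fmap M x -> confined Fob Fmap M (Fmap A B f x)) /\
  (forall H : (forall (A B : Type) (f : A -> B) (x : Fob A),
        confined Fob Fmap M x -> confined Fob Fmap M (Fmap A B f x)),
      is_NSA (conf_ob Fob Fmap M) (conf_map Fob Fmap M H) /\
      is_confined_NSA (conf_ob Fob Fmap M) (conf_map Fob Fmap M H) M).
Proof.
  pose proof HF as HF'.
  destruct HF as [HFf [[Hfin [Hfaith [Hfull Hess]]] [[u Hu] [Hprod Heq]]]].
  pose proof HFf as [Hid Hcomp]. pose proof HM as [iM HiM].
  split. { intros; apply conf_pres; auto. }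
  intros H.
  assert (allc : forall A, finiteT A -> forall x : Fob A, confined Fob Fmap M x).
  { intros A HA x. destruct (finite_inj_nat A HA) as [j Hj].
    apply conf_of_inj with (i := fun a => iM (j a)); [exact HFf|].
    intros a b E; apply Hj, HiM, E. }
  split; [split; [|split]|].
  - split.
    + intros A x. apply sig_eq. simpl. apply Hid.
    + intros A B C f g x. apply sig_eq. simpl. apply Hcomp.
  - split; [|split; [|split]].
    + intros A HA. destruct (Hfin A HA) as [l [Hnd Hl]].
      set (e := fun x : Fob A => exist (fun x => confined Fob Fmap M x) x (allc A HA x)).
      exists (map e l). split.
      * apply NoDup_map_NoDup_ForallPairs; [|exact Hnd].
        intros x y _ _ E. exact (f_equal (@proj1_sig _ _) E).
      * intros y. replace y with (e (proj1_sig y)) by (apply sig_eq; reflexivity).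
        apply in_map, Hl.
    + intros A B HA HB f g Hfg. apply Hfaith; auto. intros x.
      exact (f_equal (@proj1_sig _ _) (Hfg (exist _ x (allc A HA x)))).
    + intros A B HA HB h.
      destruct (Hfull A B HA HB (fun x => proj1_sig (h (exist _ x (allc A HA x))))) as [f Hf].
      exists f. intros x. apply sig_eq. simpl. rewrite Hf. f_equal. f_equal.
      apply sig_eq. reflexivity.
    + intros C HC. destruct (Hess C HC) as [A [HA [h [hi hs]]]]. exists A. split; [exact HA|].
      exists (fun x => h (proj1_sig x)). split.
      * intros x y E. apply sig_eq, hi, E.
      * intros c. destruct (hs c) as [x Hx]. exists (exist _ x (allc A HA x)). exact Hx.
  - split; [|split].
    + assert (cu : confined Fob Fmap M u).
      { apply conf_of_inj with (i := fun _ : unit => iM 0); [exact HFf|].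
        intros [] [] _; reflexivity. }
      exists (exist _ u cu). intros v. apply sig_eq. apply Hu.
    + intros A B. split.
      * intros z z' E.
        pose proof (f_equal (fun p => proj1_sig (fst p)) E) as E1.
        pose proof (f_equal (fun p => proj1_sig (snd p)) E) as E2. simpl in E1, E2.
        apply sig_eq. apply (proj1 (Hprod A B)). cbv beta. rewrite E1, E2. reflexivity.
      * intros [y1 y2]. destruct (proj2 (Hprod A B) (proj1_sig y1, proj1_sig y2)) as [z Hz].
        injection Hz as Hz1 Hz2.
        assert (cz : confined Fob Fmap M z).
        { apply (prod_conf Fob Fmap HF' M HM).
          - rewrite Hz1; exact (proj2_sig y1).
          - rewrite Hz2; exact (proj2_sig y2). }
        exists (exist _ z cz). f_equal; apply sig_eq; simpl; assumption.
    + intros A B f g. split.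
      * intros z z' E. apply sig_eq. apply (proj1 (Heq A B f g)).
        exact (f_equal (@proj1_sig _ _) E).
      * intros x. split.
        -- intros E. pose proof (f_equal (@proj1_sig _ _) E) as E'. simpl in E'.
           destruct (proj1 (proj2 (Heq A B f g) (proj1_sig x)) E') as [y0 Hy0].
           assert (cy : confined Fob Fmap M y0).
           { apply (eq_conf Fob Fmap HF' M A B f g). rewrite Hy0. exact (proj2_sig x). }
           exists (exist _ y0 cy). apply sig_eq. simpl. exact Hy0.
        -- intros [y Hy]. apply sig_eq. simpl.
           apply (proj2 (proj2 (Heq A B f g) (proj1_sig x))).
           exists (proj1_sig y). rewrite <- Hy. reflexivity.
  - intros A [x0 Hx0]. pose proof Hx0 as [P [[i Hi] [w Hw]]].
    exists P. split; [exists i; exact Hi|].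
    exists (exist _ w (conf_of_inj Fob Fmap HFf M _ i Hi w)).
    apply sig_eq. simpl. exact Hw.
Qed.
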